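(* Let $E$ be a semi-Montel or Schwartz space, let $\mathcal{FV}(\Omega)$ be a dom-space and let $U$ fix the topology in $\mathcal{FV}(\Omega)$. Then for every $f\in\mathcal{FV}_{E'}(U,E)_{lb}$ the map $\mathscr{R}_f\colon E'\to\mathcal{FV}(\Omega)$, $\mathscr{R}_f(e'):=f_{e'}$, belongs to $L(E'_\gamma,\mathcal{FV}(\Omega))$, and for every $\alpha\in\mathfrak{A}$ the set $\mathscr{R}_f(B_\alpha^\circ)$ is relatively compact in $\mathcal{FV}(\Omega)$, where $B_\alpha:=\{x\in E:p_\alpha(x)<1\}$.
   Context: $\mathbb{K}\in\{\mathbb{R},\mathbb{C}\}$; $E$ is a non-trivial locally convex Hausdorff space over $\mathbb{K}$ with a directed fundamental system of seminorms $(p_\alpha)_{\alpha\in\mathfrak{A}}$; $E'$ its dual, $B_\alpha^\circ$ the polar of $B_\alpha$ in $E'$, and $E'_\gamma$ is $E'$ with the topology of uniform convergence on precompact subsets of $E$. Semi-Montel: bounded sets are relatively compact; Schwartz space in the usual sense. Weighted function spaces: Let $\Omega,J,L$ be non-empty sets, $(M_l)_{l\in L}$ non-empty sets and $\mathcal{V}=((\nu_{j,l,m})_{m\in M_l})_{j\in J,l\in L}$ functions $\nu_{j,l,m}\colon\Omega\to[0,\infty)$ such that for all $x\in\Omega$, $l\in L$ there is $j\in J$ with $\nu_{j,l,m}(x)>0$ for all $m\in M_l$. Let $\mathcal{M}_{\mathrm{top}}:=\bigcup_lM_l$, and $\mathcal{M}_0,\mathcal{M}_r$ sets, the three pairwise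 disjoint, $\mathcal{M}$ their union; $(\omega_m)_{m\in\mathcal{M}}$ non-empty sets with $\Omega\subset\omega_m$ for $m\in\mathcal{M}_{\mathrm{top}}$; $T^{\mathbb{K}}_m\colon\operatorname{dom}T^{\mathbb{K}}_m\subset\mathbb{K}^\Omega\to\mathbb{K}^{\omega_m}$ linear. $\mathcal{FV}(\Omega)$ is the set of $f\in\bigcap_{m\in\mathcal{M}}\operatorname{dom}T^{\mathbb{K}}_m\cap\bigcap_{m\in\mathcal{M}_0}\ker T^{\mathbb{K}}_m$ with $|f|_{j,l}:=\sup_{x\in\Omega,m\in M_l}|T^{\mathbb{K}}_m(f)(x)|\nu_{j,l,m}(x)<\infty$ for all $j,l$, with these seminorms. $T^{\mathbb{K}}_{m,x}(f):=T^{\mathbb{K}}_m(f)(x)$. It is a dom-space if the seminorms are directed and point evaluations $f\mapsto f(x)$ are continuous. $U\subset\bigcup_{m\in\mathcal{M}}\{m\}\times\omega_m$ fixes the topology in $\mathcal{FV}(\Omega)$ if for all $j\in J$, $l\in L$ there are $i\in J$, $k\in L$, $C>0$ with $|f|_{j,l}\le C\sup\{|T^{\mathbb{K}}_m(f)(x)|\nu_{i,k,m}(x): x\in\Omega,\,m\in M_k,\,(m,x)\in U\}$ for all $f\in\mathcal{FV}(\Omega)$. $\mathcal{FV}_{E'}(U,E)$ is the set of $f\colon U\to E$ such that for each $e'\in E'$ there is a (unique) $f_{e'}\in\mathcal{FV}(\Omega)$ with $T^{\mathbb{K}}_m(f_{e'})(x)=e'(f(m,x))$ for all $(m,x)\in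 U$. For $i\in J$, $k\in L$ let $N_{U,i,k}(f):=\{f(m,x)\nu_{i,k,m}(x): x\in\Omega,\,m\in M_k,\,(m,x)\in U\}$, and $\mathcal{FV}_{E'}(U,E)_{lb}$ is the set of $f\in\mathcal{FV}_{E'}(U,E)$ with $N_{U,i,k}(f)$ bounded in $E$ for all $i\in J$, $k\in L$. *)

(* Defs.v *)
From HB Require Import structures.
From mathcomp Require Import all_boot all_order all_algebra.
From mathcomp Require Import complex.
From mathcomp Require Import boolp classical_sets cardinality reals.
Import Order.TTheory GRing.Theory Num.Theory.
Local Open Scope ring_scope.
Local Open Scope classical_set_scope.

Definition Kf (R : realType) (b : bool) : numFieldType :=
  if b then (R : numFieldType) else (R[i] : numFieldType).

Definition kabs (R : realType) (b : bool) : Kf R b -> R :=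
  match b return Kf R b -> R with
  | true => fun x : R => `|x|
  | false => fun z : R[i] => complex.Re `|z|
  end.

Definition kofR (R : realType) (b : bool) : R -> Kf R b :=
  match b return R -> Kf R b with
  | true => fun x : R => x
  | false => fun x : R => (x%:C)%C
  end.

(* Topologies given by a family of "balls" bl i e x (i an index of a    *)
(* seminorm, e > 0 a radius, x a centre).  Open sets, continuity,      *)
Section BallTopology.
Variable R : realType.

Definition bopen {V I : Type} (bl : I -> R -> V -> set V) (O : set V) : Prop :=
  forall x, O x -> exists i : I, exists2 e : R, 0 < e & bl i e x `<=` O.

Definition bcontinuous {V I W J : Type} (blV : I -> R -> V -> set V)
    (blW : J -> R -> W -> set W) (g : V -> W) : Prop :=
  forall O : set W, bopen blW O -> bopen blV (g @^-1` O).

Definition bclosure {V I : Type} (bl : I -> R -> V -> set V) (A : set V) : set V :=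
  [set x | forall O : set V, bopen bl O -> O x -> exists2 y, A y & O y].

Definition bcompact {V I : Type} (bl : I -> R -> V -> set V) (A : set V) : Prop :=
  forall F : set (set V), (forall O, F O -> bopen bl O) ->
    A `<=` \bigcup_(O in F) O ->
    exists2 G : set (set V), finite_set G /\ G `<=` F & A `<=` \bigcup_(O in G) O.

Definition brelcompact {V I : Type} (bl : I -> R -> V -> set V) (A : set V) : Prop :=
  bcompact bl (bclosure bl A).

End BallTopology.
Arguments bopen {R V I}.
Arguments bcontinuous {R V I W J}.
Arguments bclosure {R V I}.
Arguments bcompact {R V I}.
Arguments brelcompact {R V I}.

Section LCS.
Variables (R : realType) (b : bool) (E : lmodType (Kf R b)) (A : Type)
  (p : A -> E -> R).

Definition is_seminorm (q : E -> R) : Prop :=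
  (forall x y, q (x + y) <= q x + q y) /\
  (forall (c : Kf R b) x, q (c *: x) = @kabs R b c * q x).

Definition directed_seminorms : Prop :=
  forall a1 a2 : A, exists a3 : A, exists2 C : R, 0 < C &
    forall x, Num.max (p a1 x) (p a2 x) <= C * p a3 x.

Definition lcs_hausdorff : Prop := forall x : E, x != 0 -> exists a, p a x != 0.

Definition Eball (a : A) (e : R) (x : E) : set E := [set y | p a (y - x) < e].

Definition Kball (_ : unit) (e : R) (z : Kf R b) : set (Kf R b) :=
  [set w | @kabs R b (w - z) < e].

Definition lcs_bounded (B : set E) : Prop :=
  forall a, exists C : R, forall x, B x -> p a x <= C.

Definition q_precompact (q : E -> R) (B : set E) : Prop :=
  forall e : R, 0 < e -> exists xs : seq E,
    B `<=` [set y | exists2 x, x \in xs & q (y - x) < e].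

Definition lcs_precompact (B : set E) : Prop := forall a, q_precompact (p a) B.

Definition semi_montel : Prop :=
  forall B : set E, lcs_bounded B -> brelcompact Eball B.

Definition unit_ball (a : A) : set E := [set x | p a x < 1].

Definition schwartz : Prop :=
  forall a : A, exists a' : A, q_precompact (p a) (unit_ball a').

Definition is_dual_elt (e : E -> Kf R b) : Prop :=
  (forall (c : Kf R b) x y, e (c *: x + y) = c * e x + e y) /\
  bcontinuous Eball Kball e.

Definition dual := {e : E -> Kf R b | is_dual_elt e}.

Definition precompact_set := {B : set E | lcs_precompact B}.

Definition gamma_ball (B : precompact_set) (e : R) (y0 : dual) : set dual :=
  [set y | forall x, proj1_sig B x ->
     @kabs R b (proj1_sig y x - proj1_sig y0 x) < e].

Definition polar (a : A) : set dual :=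
  [set y | forall x, unit_ball a x -> @kabs R b (proj1_sig y x) <= 1].

End LCS.
Arguments is_seminorm {R b E}.
Arguments directed_seminorms {R b E A}.
Arguments lcs_hausdorff {R b E A}.
Arguments Eball {R b E A}.
Arguments lcs_bounded {R b E A}.
Arguments q_precompact {R b E}.
Arguments lcs_precompact {R b E A}.
Arguments semi_montel {R b E A}.
Arguments unit_ball {R b E A}.
Arguments schwartz {R b E A}.
Arguments is_dual_elt {R b E A}.
Arguments dual {R b E A}.
Arguments precompact_set {R b E A}.
Arguments gamma_ball {R b E A}.
Arguments polar {R b E A}.
Arguments Kball {R b}.

Record wdata (R : realType) (b : bool) := WData {
  Om : Type;
  Jt : Type;
  Lt : Type;
  Mt : Type;
  Ml : Lt -> set Mt;
  M0 : set Mt;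
  Mr : set Mt;
  om : Mt -> Type;
  inc : forall m : Mt, Om -> om m; (* inclusion Omega c omega_m (m in M_top) *)
  nu : Jt -> Lt -> Mt -> Om -> R;
  dom : forall m : Mt, set (Om -> Kf R b);
  T : forall m : Mt, (Om -> Kf R b) -> om m -> Kf R b
}.

Arguments Om {R b}.
Arguments Jt {R b}.
Arguments Lt {R b}.
Arguments Mt {R b}.
Arguments Ml {R b}.
Arguments M0 {R b}.
Arguments Mr {R b}.
Arguments om {R b}.
Arguments inc {R b}.
Arguments nu {R b}.
Arguments dom {R b}.
Arguments T {R b}.

Section Weighted.
Variables (R : realType) (b : bool) (W : wdata R b).
Local Notation K := (Kf R b).
Local Notation Om := (Om W). Local Notation Jt := (Jt W).
Local Notation Lt := (Lt W). Local Notation Mt := (Mt W).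
Local Notation Ml := (Ml W). Local Notation M0 := (M0 W).
Local Notation Mr := (Mr W). Local Notation om := (om W).
Local Notation inc := (inc W). Local Notation nu := (nu W).
Local Notation dom := (dom W). Local Notation T := (T W).

Definition Mtop : set Mt := \bigcup_(l in [set: Lt]) Ml l.

Definition wdata_ok : Prop :=
  [/\ (exists x : Om, True), (exists j : Jt, True) & (exists l : Lt, True)] /\
  (forall l, exists m, Ml l m) /\
  (forall m, exists y : om m, True) /\
  [/\ Mtop `&` M0 = set0, Mtop `&` Mr = set0, M0 `&` Mr = set0 &
      forall m, Mtop m \/ M0 m \/ Mr m] /\
  (forall m, Mtop m -> injective (inc m)) /\
  (forall j l m x, Ml l m -> 0 <= nu j l m x) /\
  (forall x l, exists j, forall m, Ml l m -> 0 < nu j l m x) /\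
  (forall m, dom m (fun _ => 0) /\
     forall (c : K) f g, dom m f -> dom m g ->
       dom m (fun x => c * f x + g x) /\
       forall y, T m (fun x => c * f x + g x) y = c * T m f y + T m g y).

Definition FV (f : Om -> K) : Prop :=
  [/\ forall m, dom m f,
      forall m, M0 m -> forall y, T m f y = 0 &
      forall j l, exists C : R, forall x m, Ml l m ->
         @kabs R b (T m f (inc m x)) * nu j l m x <= C].

Definition FVt := {f : Om -> K | FV f}.

Definition wsemi (j : Jt) (l : Lt) (f : Om -> K) : R :=
  sup [set r : R | exists x m, Ml l m /\ r = @kabs R b (T m f (inc m x)) * nu j l m x].

Definition FVball (jl : Jt * Lt) (e : R) (f : FVt) : set FVt :=
  [set g | wsemi jl.1 jl.2 (fun x => proj1_sig g x - proj1_sig f x) < e].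

Definition dom_space : Prop :=
  (forall j1 l1 j2 l2, exists j3 l3, exists2 C : R, 0 < C &
     forall f : FVt, Num.max (wsemi j1 l1 (proj1_sig f)) (wsemi j2 l2 (proj1_sig f))
                     <= C * wsemi j3 l3 (proj1_sig f)) /\
  (forall x : Om, bcontinuous FVball (@Kball R b) (fun f : FVt => proj1_sig f x)).

(* U c union_m {m} x omega_m, encoded as a family of subsets U m of omega_m *)
Definition fixes_topology (U : forall m, set (om m)) : Prop :=
  forall j l, exists i k, exists2 C : R, 0 < C &
    forall f : FVt,
      wsemi j l (proj1_sig f) <=
      C * sup [set r : R | exists x m, [/\ Ml k m, U m (inc m x) &
                 r = @kabs R b (T m (proj1_sig f) (inc m x)) * nu i k m x]].

Section VectorValued.
Variables (E : lmodType K) (A : Type) (p : A -> E -> R).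

(* f : U -> E is encoded as a map on all (m, y), only values on U matter *)
Definition FVE' (U : forall m, set (om m)) (f : forall m, om m -> E) : Prop :=
  forall e' : dual p, exists g : FVt,
    forall m y, U m y -> T m (proj1_sig g) y = proj1_sig e' (f m y).

Definition N_U (U : forall m, set (om m)) (f : forall m, om m -> E)
    (i : Jt) (k : Lt) : set E :=
  [set z | exists x m, [/\ Ml k m, U m (inc m x) &
             z = @kofR R b (nu i k m x) *: f m (inc m x)]].

Definition FVE'_lb (U : forall m, set (om m)) (f : forall m, om m -> E) : Prop :=
  FVE' U f /\ forall i k, lcs_bounded p (N_U U f i k).

End VectorValued.
End Weighted.
Arguments Mtop {R b}.
Arguments wdata_ok {R b}.
Arguments FV {R b}.
Arguments FVt {R b}.
Arguments wsemi {R b}.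
Arguments FVball {R b}.
Arguments dom_space {R b}.
Arguments fixes_topology {R b}.
Arguments FVE' {R b W E A}.
Arguments N_U {R b W E}.
Arguments FVE'_lb {R b W E A}.

(* Main.v *)
Require Import Defs.
From HB Require Import structures.
From mathcomp Require Import all_boot all_order all_algebra.
From mathcomp Require Import complex.
From mathcomp Require Import boolp classical_sets cardinality reals filter.
From mathcomp Require Import ring lra.
Import Order.TTheory GRing.Theory Num.Theory.
Local Open Scope ring_scope.
Local Open Scope classical_set_scope.

Section KLemmas.
Variables (R : realType) (b : bool).
Local Notation K := (Kf R b).

Lemma kofR_kabs (x : K) : kofR R b (kabs R b x) = `|x|.
Proof.
case: b x => /= x //.
Qed.

Lemma kofR_inj : injective (kofR R b).
Proof. case: b => /= x y //; exact: complexI. Qed.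

Lemma kofR_le r s : (kofR R b r <= kofR R b s) = (r <= s).
Proof. case: b => //=; exact: lecR. Qed.

Lemma kofRD r s : kofR R b (r + s) = kofR R b r + kofR R b s.
Proof. case: b => //=; exact: rmorphD. Qed.

Lemma kofRM r s : kofR R b (r * s) = kofR R b r * kofR R b s.
Proof. case: b => //=; exact: rmorphM. Qed.

Lemma kofR0 : kofR R b 0 = 0.
Proof. by case: b. Qed.
Lemma kofR1 : kofR R b 1 = 1.
Proof. by case: b. Qed.

Lemma norm_kofR r : `|kofR R b r| = kofR R b `|r|.
Proof.
case: b => //=. rewrite normc_def /= expr0n /= addr0 sqrtr_sqr //.
Qed.

Lemma kabs_ge0 (x : K) : 0 <= kabs R b x.
Proof. by rewrite -(kofR_le) kofR0 kofR_kabs. Qed.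

Lemma kabsD (x y : K) : kabs R b (x + y) <= kabs R b x + kabs R b y.
Proof. by rewrite -kofR_le kofRD !kofR_kabs ler_normD. Qed.

Lemma kabsM (x y : K) : kabs R b (x * y) = kabs R b x * kabs R b y.
Proof. by apply: kofR_inj; rewrite kofRM !kofR_kabs normrM. Qed.

Lemma kabsN (x : K) : kabs R b (- x) = kabs R b x.
Proof. by apply: kofR_inj; rewrite !kofR_kabs normrN. Qed.

Lemma kabs0 : kabs R b 0 = 0.
Proof. by apply: kofR_inj; rewrite !kofR_kabs normr0 kofR0. Qed.

Lemma kabs_eq0 (x : K) : kabs R b x = 0 -> x = 0.
Proof. by move=> h; apply/eqP; rewrite -normr_eq0 -kofR_kabs h kofR0. Qed.

Lemma kabs_kofR r : kabs R b (kofR R b r) = `|r|.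
Proof. by apply: kofR_inj; rewrite kofR_kabs norm_kofR. Qed.

Lemma kabsB (x y : K) : kabs R b (x - y) = kabs R b (y - x).
Proof. by rewrite -kabsN opprB. Qed.

Lemma kabs1 : kabs R b 1 = 1.
Proof. by rewrite -kofR1 kabs_kofR normr1. Qed.

Lemma kofRV r : kofR R b r^-1 = (kofR R b r)^-1.
Proof. case: b => //=; exact: fmorphV. Qed.

End KLemmas.

Lemma kabs_false (R : realType) (z : R[i]) : kabs R false z = Num.sqrt ((complex.Re z)^+2 + (complex.Im z)^+2).
Proof. by rewrite /kabs normc_def. Qed.

Lemma Re_le_kabs (R : realType) (z : R[i]) : `|complex.Re z| <= kabs R false z.
Proof.
rewrite kabs_false -sqrtr_sqr ler_sqrt ?addr_ge0 ?sqr_ge0 //.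
by rewrite lerDl sqr_ge0.
Qed.

Lemma Im_le_kabs (R : realType) (z : R[i]) : `|complex.Im z| <= kabs R false z.
Proof.
rewrite kabs_false -sqrtr_sqr ler_sqrt ?addr_ge0 ?sqr_ge0 //.
by rewrite lerDr sqr_ge0.
Qed.

Lemma kabs_false_split (R : realType) (z : R[i]) (l1 l2 : R) :
  kabs R false (z - ((l1%:C)%C + 'i%C * (l2%:C)%C)) <=
  `|complex.Re z - l1| + `|complex.Im z - l2|.
Proof.
have -> : z - ((l1%:C)%C + 'i%C * (l2%:C)%C) =
   ((complex.Re z - l1)%:C)%C + 'i%C * ((complex.Im z - l2)%:C)%C.
  by rewrite {1}[z]complexE !rmorphB /=; ring.
apply: le_trans (kabsD _ _ _ _) _.
rewrite kabsM.
have -> : kabs R false 'i%C = 1 by rewrite kabs_false /= expr0n expr1n add0r sqrtr1.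
by rewrite mul1r -!(kabs_kofR R false).
Qed.

Definition UF {X : Type} (U : set (set X)) : Prop :=
  [/\ forall A, U A -> exists x, A x,
      forall A B, U A -> A `<=` B -> U B,
      forall A B, U A -> U B -> U (A `&` B) &
      forall A, U A \/ U (~` A)].

Lemma UFE {X : Type} (Q : set (set X)) :
  (exists Q0, Q Q0) -> (forall A, Q A -> exists x, A x) ->
  (forall A B, Q A -> Q B -> exists2 C, Q C & C `<=` A `&` B) ->
  exists U, UF U /\ Q `<=` U.
Proof.
move=> Q0 Qne Qdir.
have FF : Filter (filter_from Q id) by apply: filter_from_filter.
have PF : ProperFilter (filter_from Q id).
  apply: filter_from_proper => A /Qne [x Ax]; by exists x.
have [G [UG sub]] := ultraFilterLemma PF.
exists G; split; last by move=> A QA; apply: sub; exists A.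
split.
- by move=> A GA; exact: (@filter_ex _ G (@ultra_proper _ _ UG) A GA).
- move=> A B GA AB; have PG := @ultra_proper _ _ UG; exact: filterS AB GA.
- move=> A B GA GB; have PG := @ultra_proper _ _ UG; exact: filterI.
- by move=> A; apply: in_ultra_setVsetC.
Qed.

Section UFLemmas.
Context {X : Type} (U : set (set X)) (HU : UF U).

Lemma uf_ex {A} : U A -> exists x, A x.
Proof. by case: HU => h _ _ _; apply: h. Qed.
Lemma uf_S {A B} : U A -> A `<=` B -> U B.
Proof. by case: HU => _ h _ _; apply: h. Qed.
Lemma uf_I {A B} : U A -> U B -> U (A `&` B).
Proof. by case: HU => _ _ h _; apply: h. Qed.
Lemma uf_VC A : U A \/ U (~` A).
Proof. by case: HU => _ _ _ h; apply: h. Qed.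

Lemma uf_big (T : eqType) (s : seq T) (P : T -> set X) A :
  U A -> (forall t, t \in s -> U (P t)) ->
  U (A `&` [set x | forall t, t \in s -> P t x]).
Proof.
elim: s A => [|t s IH] A UA Hs.
  refine (uf_S UA _) => x Ax; split => //.
have := IH (A `&` P t) (uf_I UA (Hs t (mem_head _ _))) (fun t' ht' => Hs t' (@mem_behead _ (t :: s) t' ht')).
move=> H; refine (uf_S H _) => x [[Ax Ptx] H2]; split=> // t'.
by rewrite in_cons => /orP [/eqP -> //|]; apply: H2.
Qed.

Lemma ULR (R : realType) (h : X -> R) (M : R) :
  U [set x | `|h x| <= M] ->
  exists l : R, forall e, 0 < e -> U [set x | `|h x - l| < e].
Proof.
move=> UD.
pose S := [set t : R | U [set x | t <= h x]].
have SM : S (- M).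
  by refine (uf_S UD _) => x /=; rewrite ler_norml => /andP[].
have Sub : forall t, S t -> t <= M.
  move=> t St; rewrite leNgt; apply/negP => Mt.
  have [x [/= h1 h2]] := uf_ex (uf_I St UD).
  move: h2; rewrite ler_norml => /andP[_ h2].
  by move: (lt_le_trans Mt h1); rewrite ltNge h2.
have hs : has_sup S by split; [exists (-M) | exists M => t /Sub].
exists (sup S) => e e0.
have [t St lt] := sup_adherent (e0) hs.
have e20 : 0 < e / 2 by rewrite divr_gt0.
have nS : ~ S (sup S + e / 2).
  move=> /(sup_upper_bound hs); rewrite leNgt => /negP; apply.
  by rewrite ltrDl.
have UC : U (~` [set x | sup S + e / 2 <= h x]).
  by case: (uf_VC [set x | sup S + e / 2 <= h x]) => // H; exfalso; exact: nS H.
refine (uf_S (uf_I St UC) _) => x [/= h1 h2].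
move: h2 => /negP; rewrite -ltNge => h2.
have h3 := lt_le_trans lt h1.
rewrite ltr_norml; apply/andP; split; lra.
Qed.

Lemma ULK (R : realType) (b : bool) (h : X -> Kf R b) (M : R) :
  U [set x | kabs R b (h x) <= M] ->
  exists l : Kf R b, forall e, 0 < e -> U [set x | kabs R b (h x - l) < e].
Proof.
case: b h => /= h UD; first exact: ULR _ _ _ UD.
have [l1 H1] := ULR _ (fun x => complex.Re (h x)) _ (uf_S UD (fun x hx => le_trans (Re_le_kabs _ _) hx)).
have [l2 H2] := ULR _ (fun x => complex.Im (h x)) _ (uf_S UD (fun x hx => le_trans (Im_le_kabs _ _) hx)).
exists ((l1%:C)%C + 'i%C * (l2%:C)%C) => e e0.
have e20 : 0 < e / 2 by rewrite divr_gt0.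
refine (uf_S (uf_I (H1 _ e20) (H2 _ e20)) _) => x [/= a1 a2].
apply: le_lt_trans (kabs_false_split _ _ _ _) _.
by rewrite (splitr e) ltrD.
Qed.

End UFLemmas.
Arguments uf_ex {X U} HU {A}.
Arguments uf_S {X U} HU {A B}.
Arguments uf_I {X U} HU {A B}.
Arguments uf_VC {X U} HU A.
Arguments uf_big {X U} HU {T} s P {A}.
Arguments ULK {X U} HU {R b} h M.

Arguments kofR_kabs {R b}.
Arguments kofR_inj {R b}.
Arguments kofR_le {R b}.
Arguments kofRD {R b}.
Arguments kofRM {R b}.
Arguments kofR0 {R b}.
Arguments kofR1 {R b}.
Arguments norm_kofR {R b}.
Arguments kabs_ge0 {R b}.
Arguments kabsD {R b}.
Arguments kabsM {R b}.
Arguments kabsN {R b}.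
Arguments kabs0 {R b}.
Arguments kabs_eq0 {R b}.
Arguments kabs_kofR {R b}.
Arguments kabsB {R b}.
Arguments kabs1 {R b}.
Arguments kofRV {R b}.

Lemma seq_choice {T U : eqType} (P : U -> T -> Prop) (s : seq T) :
  (forall O, O \in s -> exists x, P x O) ->
  exists xs : seq U, forall O, O \in s -> exists2 x, x \in xs & P x O.
Proof.
elim: s => [|t s IH] H; first by exists [::].
have [xs Hxs] := IH (fun O hO => H O (@mem_behead _ (t :: s) O hO)).
have [x Hx] := H t (mem_head _ _).
exists (x :: xs) => O; rewrite in_cons => /orP [/eqP ->|/Hxs [y hy Py]].
  by exists x => //; rewrite mem_head.
by exists y => //; rewrite in_cons hy orbT.
Qed.

Section ELemmas.
Variables (R : realType) (b : bool) (E : lmodType (Kf R b)) (A : Type)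
  (p : A -> E -> R) (Hsemi : forall a, is_seminorm (p a)).
Local Notation K := (Kf R b).
Local Notation kabs := (kabs R b).
Local Notation kofR := (kofR R b).

Lemma pZ a (c : K) x : p a (c *: x) = kabs c * p a x.
Proof. by case: (Hsemi a) => _ ->. Qed.
Lemma pD a x y : p a (x + y) <= p a x + p a y.
Proof. by case: (Hsemi a) => ->. Qed.
Lemma p0 a : p a 0 = 0.
Proof. by rewrite -(scale0r (0 : E)) pZ kabs0 mul0r. Qed.
Lemma pN a x : p a (- x) = p a x.
Proof. by rewrite -scaleN1r pZ kabsN kabs1 mul1r. Qed.
Lemma p_ge0 a x : 0 <= p a x.
Proof.
have h := pD a x (- x). rewrite subrr in h. rewrite p0 in h. rewrite pN in h.
lra.
Qed.
Lemma pBC a x y : p a (x - y) = p a (y - x).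
Proof. by rewrite -pN opprB. Qed.
Lemma pB3 a x y z : p a (x - z) <= p a (x - y) + p a (y - z).
Proof. by have := pD a (x - y) (y - z); rewrite addrA subrK. Qed.

Definition ev (e : dual p) : E -> K := proj1_sig e.

Lemma ev_lin (e : dual p) c x y : ev e (c *: x + y) = c * ev e x + ev e y.
Proof. exact: (proj1 (proj2_sig e)). Qed.
Lemma ev0 (e : dual p) : ev e 0 = 0.
Proof.
have := ev_lin e 1 0 0; rewrite scaler0 add0r mul1r.
by move/(congr1 (fun z => z - ev e 0)); rewrite subrr addrK.
Qed.
Lemma evZ (e : dual p) c x : ev e (c *: x) = c * ev e x.
Proof. by rewrite -[c *: x]addr0 ev_lin ev0 addr0. Qed.
Lemma evD (e : dual p) x y : ev e (x + y) = ev e x + ev e y.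
Proof. by rewrite -[x in LHS]scale1r ev_lin mul1r. Qed.
Lemma evB (e : dual p) x y : ev e (x - y) = ev e x - ev e y.
Proof. by rewrite evD -scaleN1r evZ mulN1r. Qed.

Lemma kofR_neq0 r : r != 0 -> kofR r != 0.
Proof. by apply: contra => /eqP h; apply/eqP; apply: (@kofR_inj R b); rewrite kofR0. Qed.

Lemma polar_bound a (e : dual p) x : polar p a e -> kabs (ev e x) <= p a x.
Proof.
move=> Pe; rewrite leNgt; apply/negP => hlt.
pose t := (p a x + kabs (ev e x)) / 2.
have t0 : 0 < t by have := p_ge0 a x; rewrite /t; lra.
have h1 : p a x < t by rewrite /t; lra.
have h2 : t < kabs (ev e x) by rewrite /t; lra.
have hk : kabs (kofR t^-1) = t^-1 by rewrite kabs_kofR ger0_norm // invr_ge0 ltW.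
have ub : unit_ball p a (kofR t^-1 *: x).
  rewrite /unit_ball /= pZ hk.
  by rewrite mulrC ltr_pdivrMr // mul1r.
have h4 : kabs (ev e (kofR t^-1 *: x)) <= 1 := Pe _ ub.
move: h4; rewrite evZ kabsM hk mulrC ler_pdivrMr // mul1r => h3.
by move: (lt_le_trans h2 h3); rewrite ltxx.
Qed.


Lemma Eball_open a e x : bopen (Eball p) (Eball p a e x).
Proof.
move=> y /= hy; exists a, (e - p a (y - x)); first by rewrite subr_gt0.
move=> z; rewrite /Eball /= => hz; apply: le_lt_trans (pB3 a z y x) _; lra.
Qed.

Lemma bclosure_sub {V I : Type} (bl : I -> R -> V -> set V) (B : set V) :
  B `<=` bclosure bl B.
Proof. by move=> x Bx O _ Ox; exists x. Qed.

Lemma bounded_precompact (HE : semi_montel p \/ schwartz p) N :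
  lcs_bounded p N -> lcs_precompact p N.
Proof.
move=> Nb a e e0; case: HE => [HM|HS].
  have Hc := HM N Nb.
  pose F := [set O | exists x, O = Eball p a e x].
  have [G [fG GF] cov] : exists2 G : set (set E), finite_set G /\ G `<=` F &
      bclosure (Eball p) N `<=` \bigcup_(O in G) O.
    apply: Hc; first by move=> O [x ->]; apply: Eball_open.
    move=> y _; exists (Eball p a e y); first by exists y.
    by rewrite /Eball /= subrr p0.
  have [s Gs] := (finite_seqP G).1 fG.
  have sGs : forall O, O \in s -> G O by move=> O hO; rewrite Gs.
  have [xs Hxs] := seq_choice (fun x O => O = Eball p a e x) s
     (fun O hO => GF O (sGs O hO)).
  exists xs => z Nz.
  have [O GO Oz] := cov z (bclosure_sub _ _ _ Nz).
  have : O \in s by move: GO; rewrite Gs.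
  move=> /Hxs [x hx hO]; exists x => //; by move: Oz; rewrite hO.
have [a' Ha'] := HS a.
have [M HM] := Nb a'.
pose t := `|M| + 1.
have t0 : 0 < t by rewrite /t; have := normr_ge0 M; lra.
have hk : kabs (kofR t^-1) = t^-1 by rewrite kabs_kofR ger0_norm // invr_ge0 ltW.
have hk' : kabs (kofR t) = t by rewrite kabs_kofR ger0_norm // ltW.
have [xs Hxs] := Ha' (e / t) (divr_gt0 e0 t0).
exists (map (fun x => kofR t *: x) xs) => z Nz.
have ub : unit_ball p a' (kofR t^-1 *: z).
  rewrite /unit_ball /= pZ hk mulrC ltr_pdivrMr // mul1r.
  have := HM z Nz; have := ler_norm M; rewrite /t; lra.
have [x hx hp] := Hxs _ ub.
exists (kofR t *: x); first by apply: map_f.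
have -> : z - kofR t *: x = kofR t *: (kofR t^-1 *: z - x).
  rewrite scalerBr scalerA -kofRM mulfV ?lt0r_neq0 // kofR1 scale1r //.
rewrite pZ hk'.
by move: hp; rewrite ltr_pdivlMr // mulrC.
Qed.

End ELemmas.
Arguments pZ {R b E A p}.
Arguments pD {R b E A p}.
Arguments p0 {R b E A p}.
Arguments pN {R b E A p}.
Arguments p_ge0 {R b E A p}.
Arguments pBC {R b E A p}.
Arguments pB3 {R b E A p}.
Arguments ev_lin {R b E A p}.
Arguments ev0 {R b E A p}.
Arguments evZ {R b E A p}.
Arguments evD {R b E A p}.
Arguments evB {R b E A p}.
Arguments polar_bound {R b E A p}.
Arguments Eball_open {R b E A p}.
Arguments bounded_precompact {R b E A p}.
Arguments kofR_neq0 {R b}.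
Arguments bclosure_sub {R V I}.
Arguments ev {R b E A p}.

Section FVLemmas.
Variables (R : realType) (b : bool) (W : wdata R b) (HW : wdata_ok W).
Local Notation K := (Kf R b).
Local Notation kabs := (kabs R b).
Local Notation kofR := (kofR R b).

Lemma HW_Om : exists x : Om W, True.
Proof. by case: HW => -[[]]. Qed.
Lemma HW_Ml l : exists m, Ml W l m.
Proof. by case: HW => _ [h _]. Qed.
Lemma HW_nu j l m x : Ml W l m -> 0 <= nu W j l m x.
Proof. by case: HW => _ [_ [_ [_ [_ [h _]]]]]; apply: h. Qed.
Lemma HW_dom m : dom W m (fun _ => 0) /\
     forall (c : K) f g, dom W m f -> dom W m g ->
       dom W m (fun x => c * f x + g x) /\
       forall y, T W m (fun x => c * f x + g x) y = c * T W m f y + T W m g y.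
Proof. by case: HW => _ [_ [_ [_ [_ [_ [_ h]]]]]]; apply: h. Qed.

Definition lc (c : K) (f g : Om W -> K) := fun x => c * f x + g x.

Lemma T_lc c f g m y : FV W f -> FV W g ->
  T W m (lc c f g) y = c * T W m f y + T W m g y.
Proof. by case=> hf _ _ [hg _ _]; have [_ /(_ c f g (hf m) (hg m)) [_ ->]] := HW_dom m. Qed.

Lemma FV_lc c f g : FV W f -> FV W g -> FV W (lc c f g).
Proof.
move=> Ff Fg; have [hf h0f hbf] := Ff; have [hg h0g hbg] := Fg.
split.
- by move=> m; have [_ /(_ c f g (hf m) (hg m)) []] := HW_dom m.
- by move=> m M0m y; rewrite T_lc // h0f // h0g // mulr0 addr0.
- move=> j l; have [C1 H1] := hbf j l; have [C2 H2] := hbg j l.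
  exists (kabs c * C1 + C2) => x m Mm; rewrite T_lc //.
  have n0 := HW_nu j l m x Mm.
  apply: le_trans (ler_wpM2r n0 (kabsD _ _)) _.
  rewrite mulrDl kabsM -mulrA; apply: lerD; last exact: H2.
  by apply: ler_wpM2l; [apply: kabs_ge0|apply: H1].
Qed.

Lemma sub_lc (f g : Om W -> K) : (fun x => f x - g x) = lc (-1) g f.
Proof. by apply: funext => x; rewrite /lc mulN1r addrC. Qed.

Lemma FV_sub f g : FV W f -> FV W g -> FV W (fun x => f x - g x).
Proof. by move=> *; rewrite sub_lc; apply: FV_lc. Qed.

Lemma T_sub f g m y : FV W f -> FV W g ->
  T W m (fun x => f x - g x) y = T W m f y - T W m g y.
Proof. by move=> *; rewrite sub_lc T_lc // mulN1r addrC. Qed.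

Definition wset j l (f : Om W -> K) := [set r : R | exists x m, Ml W l m /\
   r = kabs (T W m f (inc W m x)) * nu W j l m x].

Lemma wset_ne j l f : wset j l f !=set0.
Proof.
have [x _] := HW_Om; have [m hm] := HW_Ml l.
by exists (kabs (T W m f (inc W m x)) * nu W j l m x); exists x, m.
Qed.

Lemma ws_ub j l f x m : FV W f -> Ml W l m ->
  kabs (T W m f (inc W m x)) * nu W j l m x <= wsemi W j l f.
Proof.
move=> [_ _ hb] hm; have [C HC] := hb j l.
apply: (sup_upper_bound (E := wset j l f)); last by exists x, m.
split; first exact: wset_ne.
by exists C => r [x' [m' [hm' ->]]]; apply: HC.
Qed.

Lemma ws_le j l f M :
  (forall x m, Ml W l m -> kabs (T W m f (inc W m x)) * nu W j l m x <= M) ->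
  wsemi W j l f <= M.
Proof.
move=> H; apply: ge_sup; first exact: wset_ne.
by move=> r [x [m [hm ->]]]; apply: H.
Qed.

Lemma ws_ge0 j l f : FV W f -> 0 <= wsemi W j l f.
Proof.
move=> Ff; have [x _] := HW_Om; have [m hm] := HW_Ml l.
apply: le_trans (ws_ub j l f x m Ff hm).
by apply: mulr_ge0; [apply: kabs_ge0|apply: HW_nu].
Qed.

Lemma ws_tri j l f g h : FV W f -> FV W g -> FV W h ->
  wsemi W j l (fun x => f x - h x) <=
  wsemi W j l (fun x => f x - g x) + wsemi W j l (fun x => g x - h x).
Proof.
move=> Ff Fg Fh; apply: ws_le => x m hm.
have n0 := HW_nu j l m x hm.
rewrite T_sub //.
have -> : T W m f (inc W m x) - T W m h (inc W m x) =
  (T W m f (inc W m x) - T W m g (inc W m x)) + (T W m g (inc W m x) - T W m h (inc W m x)).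
  by rewrite addrA subrK.
apply: le_trans (ler_wpM2r n0 (kabsD _ _)) _.
rewrite mulrDl; apply: lerD.
  by rewrite -T_sub //; apply: ws_ub => //; apply: FV_sub.
by rewrite -T_sub //; apply: ws_ub => //; apply: FV_sub.
Qed.

Lemma ws_sym j l f g : FV W f -> FV W g ->
  wsemi W j l (fun x => f x - g x) = wsemi W j l (fun x => g x - f x).
Proof.
move=> Ff Fg; rewrite /wsemi; congr sup; apply/seteqP; split=> r [x [m [hm ->]]];
  by exists x, m; split => //; rewrite !T_sub // kabsB.
Qed.

Lemma ws_0 j l f : FV W f -> wsemi W j l (fun x => f x - f x) = 0.
Proof.
move=> Ff; apply/eqP; rewrite eq_le ws_ge0 ?andbT; last exact: FV_sub.
apply: ws_le => x m hm; rewrite T_sub // subrr kabs0 mul0r //.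
Qed.

End FVLemmas.
Arguments HW_Om {R b W}.
Arguments HW_Ml {R b W}.
Arguments HW_nu {R b W}.
Arguments HW_dom {R b W}.
Arguments T_lc {R b W}.
Arguments FV_lc {R b W}.
Arguments sub_lc {R b W}.
Arguments FV_sub {R b W}.
Arguments T_sub {R b W}.
Arguments wset_ne {R b W}.
Arguments ws_ub {R b W}.
Arguments ws_le {R b W}.
Arguments ws_ge0 {R b W}.
Arguments ws_tri {R b W}.
Arguments ws_sym {R b W}.
Arguments ws_0 {R b W}.
Arguments lc {R b W}. Arguments wset {R b W}.

Section Main.
Variables (R : realType) (b : bool)
  (E : lmodType (Kf R b)) (A : Type) (p : A -> E -> R)
  (Hsemi : forall a, is_seminorm (p a))
  (HE : semi_montel p \/ schwartz p)
  (W : wdata R b) (HW : wdata_ok W)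
  (Hdom : dom_space W)
  (U : forall m : Mt W, set (om W m))
  (HU : fixes_topology W U)
  (f : forall m : Mt W, om W m -> E)
  (Hf : FVE'_lb p U f)
  (Rf : dual p -> FVt W)
  (HRf : forall (e' : dual p) (m : Mt W) (y : om W m),
           U m y -> T W m (proj1_sig (Rf e')) y = proj1_sig e' (f m y)).
Local Notation K := (Kf R b).
Local Notation kabs := (kabs R b).
Local Notation kofR := (kofR R b).
Local Notation FVt := (FVt W).

Lemma FVt_ext (g h : FVt) : proj1_sig g = proj1_sig h -> g = h.
Proof.
case: g h => g Fg [h Fh] /= E0; subst h; congr exist; exact: Prop_irrelevance.
Qed.

Definition FVsub (g h : FVt) : FVt :=
  exist _ (fun x => proj1_sig g x - proj1_sig h x)
    (FV_sub HW _ _ (proj2_sig g) (proj2_sig h)).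

Lemma FVball_open jl e (g : FVt) : bopen (FVball W) (FVball W jl e g).
Proof.
move=> h; rewrite /FVball /= => hh.
exists jl, (e - wsemi W jl.1 jl.2 (fun x => proj1_sig h x - proj1_sig g x)).
  by rewrite subr_gt0.
move=> k; rewrite /FVball /= => hk.
have := ws_tri HW jl.1 jl.2 _ _ _ (proj2_sig k) (proj2_sig h) (proj2_sig g).
lra.
Qed.

Lemma Kball_open d (z : K) : bopen (@Kball R b) (Kball tt d z).
Proof.
move=> w; rewrite /Kball /= => hw.
exists tt, (d - kabs (w - z)); first by rewrite subr_gt0.
move=> v; rewrite /Kball /= => hv.
have := kabsD (v - w) (w - z); rewrite addrA subrK; lra.
Qed.

Lemma separation (g h : FVt) :
  (forall j l e, 0 < e ->
     wsemi W j l (fun x => proj1_sig h x - proj1_sig g x) < e) -> g = h.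
Proof.
move=> H; apply: FVt_ext; apply: funext => x.
apply: contrapT => neq.
pose d := kabs (proj1_sig g x - proj1_sig h x).
have d0 : 0 < d.
  rewrite lt_neqAle kabs_ge0 andbT; apply/eqP => /esym /kabs_eq0 /eqP.
  by rewrite subr_eq0 => /eqP.
have op := Hdom.2 x (Kball tt d (proj1_sig g x)) (Kball_open _ _).
have gin : Kball tt d (proj1_sig g x) (proj1_sig g x) by rewrite /Kball /= subrr kabs0.
have [jl [e e0 sub]] := op g gin.
have : FVball W jl e g h by rewrite /FVball /=; apply: H.
move=> /sub; rewrite /Kball /= kabsB -/d ltxx //.
Qed.


Lemma fix_bound j l : exists i k, exists2 C : R, 0 < C & forall (g : FVt) (M : R),
  0 <= M ->
  (forall x m, Ml W k m -> U m (inc W m x) ->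
     kabs (T W m (proj1_sig g) (inc W m x)) * nu W i k m x <= M) ->
  wsemi W j l (proj1_sig g) <= C * M.
Proof.
have [i [k [C C0 HC]]] := HU j l.
exists i, k, C => // g M M0 HM.
apply: le_trans (HC g) _; rewrite ler_pM2l //.
set S := [set r | _].
case: (pselect (S !=set0)) => [ne|em].
  by apply: ge_sup ne _ => r [x [m [hm hu ->]]]; apply: HM.
have -> : S = set0 by apply/seteqP; split => // r Sr; apply: em; exists r.
by rewrite sup0.
Qed.

Lemma TN e1 e2 i k x m : Ml W k m -> U m (inc W m x) ->
  kabs (T W m (fun t => proj1_sig (Rf e1) t - proj1_sig (Rf e2) t) (inc W m x))
    * nu W i k m x
  = kabs (ev e1 (kofR (nu W i k m x) *: f m (inc W m x))
          - ev e2 (kofR (nu W i k m x) *: f m (inc W m x))).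
Proof.
move=> hm hu.
rewrite (T_sub HW _ _ _ _ (proj2_sig (Rf e1)) (proj2_sig (Rf e2))).
rewrite !(HRf _ _ _ hu) !evZ -mulrBr kabsM kabs_kofR.
by rewrite ger0_norm ?(HW_nu HW _ _ _ _ hm) // mulrC.
Qed.

Lemma part1 (c : K) (e1 e2 e3 : dual p) :
  (forall x, proj1_sig e3 x = c * proj1_sig e1 x + proj1_sig e2 x) ->
  forall t, proj1_sig (Rf e3) t = c * proj1_sig (Rf e1) t + proj1_sig (Rf e2) t.
Proof.
move=> H3.
pose h : FVt := exist _ (lc c (proj1_sig (Rf e1)) (proj1_sig (Rf e2)))
   (FV_lc HW _ _ _ (proj2_sig _) (proj2_sig _)).
have : Rf e3 = h.
  apply: separation => j l e e0.
  have [i [k [C C0 HC]]] := fix_bound j l.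
  apply: le_lt_trans (HC (FVsub h (Rf e3)) 0 (lexx 0) _) _; last by rewrite mulr0.
  move=> x m hm hu /=.
  rewrite (T_sub HW _ _ _ _ (proj2_sig h) (proj2_sig (Rf e3))) /=.
  rewrite (T_lc HW _ _ _ _ _ (proj2_sig (Rf e1)) (proj2_sig (Rf e2))).
  by rewrite !(HRf _ _ _ hu) H3 subrr kabs0 mul0r.
by move=> -> t.
Qed.

Lemma part2 : bcontinuous (gamma_ball p) (FVball W) Rf.
Proof.
move=> O Oop e0 /= Oe0.
have [jl [eps eps0 sub]] := Oop _ Oe0.
have [i [k [C C0 HC]]] := fix_bound jl.1 jl.2.
have Npc : lcs_precompact p (N_U U f i k) :=
  bounded_precompact Hsemi HE _ (Hf.2 i k).
have d0 : 0 < eps / (2 * C) by rewrite divr_gt0 // mulr_gt0.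
exists (exist _ (N_U U f i k) Npc), (eps / (2 * C)) => // y /= hy.
apply: sub; rewrite /FVball /=.
apply: le_lt_trans (HC (FVsub (Rf y) (Rf e0)) (eps / (2 * C)) (ltW d0) _) _.
  move=> x m hm hu /=; rewrite (TN _ _ _ _ _ _ hm hu); apply: ltW; apply: hy.
  by exists x, m; split.
have -> : C * (eps / (2 * C)) = eps / 2 by field; rewrite lt0r_neq0.
lra.
Qed.


Lemma ulim (a : A) (Uf : set (set (dual p))) : UF Uf -> Uf (polar p a) ->
  exists2 phi : dual p, polar p a phi &
  forall j l eps, 0 < eps -> Uf [set e' | wsemi W j l
      (fun x => proj1_sig (Rf e') x - proj1_sig (Rf phi) x) < eps].
Proof.
move=> HUf Upol.
have lim : forall x : E, exists l : K, forall eps, 0 < eps ->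
    Uf [set e' | kabs (ev e' x - l) < eps].
  move=> x; apply: (ULK HUf (fun e' => ev e' x) (p a x)).
  by refine (uf_S HUf Upol _) => e' Pe'; exact: polar_bound Hsemi a e' x Pe'.
have /choice [phi0 Hphi] := lim.
have uniq : forall (h : dual p -> K) l1 l2,
    (forall eps, 0 < eps -> Uf [set e' | kabs (h e' - l1) < eps]) ->
    (forall eps, 0 < eps -> Uf [set e' | kabs (h e' - l2) < eps]) -> l1 = l2.
  move=> h l1 l2 H1 H2; apply: contrapT => neq.
  pose d := kabs (l1 - l2).
  have d0 : 0 < d.
    rewrite lt_neqAle kabs_ge0 andbT; apply/eqP => /esym /kabs_eq0 /eqP.
    by rewrite subr_eq0 => /eqP.
  have d20 : 0 < d / 2 by rewrite divr_gt0.
  have [e' [/= h1 h2]] := uf_ex HUf (uf_I HUf (H1 _ d20) (H2 _ d20)).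
  have := kabsD (l1 - h e') (h e' - l2); rewrite addrA subrK -/d (kabsB l1).
  lra.
have lin : forall c x y, phi0 (c *: x + y) = c * phi0 x + phi0 y.
  move=> c x y; apply: (uniq (fun e' => ev e' (c *: x + y))); first exact: Hphi.
  move=> eps eps0.
  have c0 := kabs_ge0 c.
  pose dd := eps / (2 * (kabs c + 1)).
  have dd0 : 0 < dd by rewrite divr_gt0 // mulr_gt0 //; lra.
  refine (uf_S HUf (uf_I HUf (Hphi x dd dd0) (Hphi y dd dd0)) _) => e' [/= h1 h2].
  rewrite ev_lin.
  have -> : c * ev e' x + ev e' y - (c * phi0 x + phi0 y) =
      c * (ev e' x - phi0 x) + (ev e' y - phi0 y) by ring.
  apply: le_lt_trans (kabsD _ _) _; rewrite kabsM.
  have h3 : kabs c * kabs (ev e' x - phi0 x) <= kabs c * dd.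
    by apply: ler_wpM2l => //; apply: ltW.
  have E2 : kabs c * dd + dd = eps / 2.
    by rewrite /dd; field; have := kabs_ge0 c; lra.
  lra.
have bnd : forall x, kabs (phi0 x) <= p a x.
  move=> x; apply/ler_addgt0Pr => eps eps0.
  have [e' [/= h1 h2]] := uf_ex HUf (uf_I HUf (Hphi x eps eps0) Upol).
  have := kabsD (phi0 x - ev e' x) (ev e' x); rewrite subrK (kabsB (phi0 x)).
  have := polar_bound Hsemi a e' x h2; lra.
have cont : bcontinuous (Eball p) (@Kball R b) phi0.
  move=> O Oop x /= Ox; have [[] [eps eps0 sub]] := Oop _ Ox.
  exists a, eps => // y; rewrite /Eball /= => hy; apply: sub; rewrite /Kball /=.
  have e : y - x = (-1) *: x + y by rewrite scaleN1r addrC.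
  have -> : phi0 y - phi0 x = phi0 (y - x) by rewrite e lin mulN1r addrC.
  exact: le_lt_trans (bnd _) hy.
pose phi : dual p := exist _ phi0 (conj lin cont).
have Pphi : polar p a phi.
  by move=> x ux; apply: le_trans (bnd x) _; apply: ltW.
exists phi => // j l eps eps0.
have Hphi' : forall z e, 0 < e -> Uf [set e' | kabs (ev e' z - ev phi z) < e] := Hphi.
have [i [k [C C0 HC]]] := fix_bound j l.
have Npc := bounded_precompact Hsemi HE _ (Hf.2 i k) a.
pose dd := eps / (2 * C).
have dd0 : 0 < dd by rewrite divr_gt0 // mulr_gt0.
have dd30 : 0 < dd / 3 by rewrite divr_gt0.
have [zs Hzs] := Npc (dd / 3) dd30.
have Ubig := uf_big HUf zs (fun z => [set e' | kabs (ev e' z - ev phi z) < dd / 3])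
   Upol (fun z _ => Hphi' z _ dd30).
refine (uf_S HUf Ubig _) => e' [Pe' Hall] /=.
apply: le_lt_trans (HC (FVsub (Rf e') (Rf phi)) dd (ltW dd0) _) _; last first.
  have -> : C * dd = eps / 2 by rewrite /dd; field; rewrite lt0r_neq0.
  lra.
move=> x m hm hu /=; rewrite (TN _ _ _ _ _ _ hm hu).
set z := kofR _ *: _.
have Nz : N_U U f i k z by exists x, m.
have [zr hzr pz] := Hzs z Nz.
have h0 : kabs (ev e' zr - ev phi zr) < dd / 3 := Hall zr hzr.
have b1 := polar_bound Hsemi a e' (z - zr) Pe'.
have b2 := polar_bound Hsemi a phi (z - zr) Pphi.
rewrite !evB in b1 b2.
have -> : ev e' z - ev phi z = ((ev e' z - ev e' zr) + (ev e' zr - ev phi zr))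
    + - (ev phi z - ev phi zr) by ring.
apply: le_trans (kabsD _ _) _; rewrite kabsN.
have := kabsD (ev e' z - ev e' zr) (ev e' zr - ev phi zr).
lra.
Qed.


Lemma stepA a (y : FVt) :
  bclosure (FVball W) [set Rf e' | e' in polar p a] y ->
  exists2 phi, polar p a phi & Rf phi = y.
Proof.
move=> cy.
pose Q := [set Qs : set (dual p) | exists j l eps, 0 < eps /\ Qs = polar p a `&`
   [set e' | wsemi W j l (fun x => proj1_sig (Rf e') x - proj1_sig y x) < eps]].
have [[_ [j0 _] [l0 _]] _] := HW.
have Q0 : Q (polar p a `&` [set e' | wsemi W j0 l0
    (fun x => proj1_sig (Rf e') x - proj1_sig y x) < 1]) by exists j0, l0, 1.
have [Uf [HUf QU]] : exists Uf, UF Uf /\ Q `<=` Uf.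
  apply: UFE; first by eexists; exact: Q0.
  - move=> Qs [j [l [eps [eps0 ->]]]].
    have yin : FVball W (j, l) eps y y by rewrite /FVball /= (ws_0 HW _ _ _ (proj2_sig y)).
    have [w [e' Pe' <-] hw] := cy (FVball W (j, l) eps y) (FVball_open _ _ _) yin.
    by exists e'; split.
  - move=> Q1 Q2 [j1 [l1 [e1 [e10 ->]]]] [j2 [l2 [e2 [e20 ->]]]].
    have [j3 [l3 [C C0 HC]]] := Hdom.1 j1 l1 j2 l2.
    have /andP [m1 m2] : (Num.min e1 e2 <= e1) && (Num.min e1 e2 <= e2) by rewrite -le_min.
    have mpos : 0 < Num.min e1 e2 by rewrite lt_min e10 e20.
    exists (polar p a `&` [set e' | wsemi W j3 l3
        (fun x => proj1_sig (Rf e') x - proj1_sig y x) < Num.min e1 e2 / C]).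
      by exists j3, l3, (Num.min e1 e2 / C); split => //; rewrite divr_gt0.
    move=> e' [Pe' /= h]; have := HC (FVsub (Rf e') y) => /=; rewrite ge_max => /andP [h1 h2].
    move: h; rewrite ltr_pdivlMr // => h.
    by split; split => //=; lra.
have Upol : Uf (polar p a) by refine (uf_S HUf (QU _ Q0) _) => e' [].
have [phi Pphi Hconv] := ulim _ _ HUf Upol.
exists phi => //; apply/esym; apply: separation => j l eps eps0.
have e20 : 0 < eps / 2 by rewrite divr_gt0.
have Q1 : Uf (polar p a `&` [set e' | wsemi W j l
    (fun x => proj1_sig (Rf e') x - proj1_sig y x) < eps / 2]).
  by apply: QU; exists j, l, (eps / 2).
have [e' [[_ /= h1] /= h2]] := uf_ex HUf (uf_I HUf Q1 (Hconv j l (eps / 2) e20)).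
have := ws_tri HW j l _ _ _ (proj2_sig (Rf phi)) (proj2_sig (Rf e')) (proj2_sig y).
rewrite (ws_sym HW j l _ _ (proj2_sig (Rf phi)) (proj2_sig (Rf e'))).
lra.
Qed.

Lemma part3 a : brelcompact (FVball W) [set Rf e' | e' in polar p a].
Proof.
move=> F Fop cov; apply: contrapT => nH.
pose Q := [set Qs : set (dual p) | exists G : set (set FVt),
  [/\ finite_set G, G `<=` F &
      Qs = polar p a `&` [set e' | forall O, G O -> ~ O (Rf e')]]].
have Q0 : Q (polar p a `&` [set e' | forall O, set0 O -> ~ O (Rf e')]).
  by exists set0; split.
have [Uf [HUf QU]] : exists Uf, UF Uf /\ Q `<=` Uf.
  apply: UFE; first by eexists; exact: Q0.
  - move=> Qs [G [fG GF ->]]; apply: contrapT => hne; apply: nH; exists G => //.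
    move=> y /(stepA a) [phi Pphi <-]; apply: contrapT => hn; apply: hne.
    exists phi; split => // O GO ORf; apply: hn; by exists O.
  - move=> Q1 Q2 [G1 [f1 s1 ->]] [G2 [f2 s2 ->]].
    exists (polar p a `&` [set e' | forall O, (G1 `|` G2) O -> ~ O (Rf e')]).
      exists (G1 `|` G2); split => //; first by rewrite finite_setU.
      by move=> O [/s1|/s2].
    by move=> e' [Pe' /= h]; split; split => // O GO; apply: h; [left|right].
have Upol : Uf (polar p a) by refine (uf_S HUf (QU _ Q0) _) => e' [].
have [phi Pphi Hconv] := ulim _ _ HUf Upol.
have cphi : bclosure (FVball W) [set Rf e' | e' in polar p a] (Rf phi).
  by apply: bclosure_sub; exists phi.
have [O FO ORphi] := cov _ cphi.
have [jl [eps eps0 sub]] := Fop O FO _ ORphi.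
have Q1 : Uf (polar p a `&` [set e' | forall O', [set O] O' -> ~ O' (Rf e')]).
  apply: QU; exists [set O]; split => //.
  by move=> O' ->.
have [e' [[_ /= h1] /= h2]] :=
  uf_ex HUf (uf_I HUf Q1 (Hconv jl.1 jl.2 eps eps0)).
by apply: (h1 O erefl); apply: sub; exact: h2.
Qed.

End Main.

Theorem proposition4p4 (R : realType) (b : bool)
  (E : lmodType (Kf R b)) (A : Type) (p : A -> E -> R)
  (HA : exists a : A, True)
  (Hsemi : forall a, is_seminorm (p a))
  (Hdir : directed_seminorms p)
  (Hhaus : lcs_hausdorff p)
  (Hnontriv : exists x : E, x != 0)
  (HE : semi_montel p \/ schwartz p)
  (W : wdata R b) (HW : wdata_ok W)
  (Hdom : dom_space W)
  (U : forall m : Mt W, set (om W m))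
  (HU : fixes_topology W U)
  (f : forall m : Mt W, om W m -> E)
  (Hf : FVE'_lb p U f)
  (Rf : dual p -> FVt W)
  (HRf : forall (e' : dual p) (m : Mt W) (y : om W m),
           U m y -> T W m (proj1_sig (Rf e')) y = proj1_sig e' (f m y)) :
  (* R_f is linear ... *)
  (forall (c : Kf R b) (e1 e2 e3 : dual p),
     (forall x, proj1_sig e3 x = c * proj1_sig e1 x + proj1_sig e2 x) ->
     forall t, proj1_sig (Rf e3) t = c * proj1_sig (Rf e1) t + proj1_sig (Rf e2) t) /\
  (* ... and continuous from E'_gamma to FV(Omega) ... *)
  bcontinuous (gamma_ball p) (FVball W) Rf /\
  (* ... and R_f(B_alpha^polar) is relatively compact in FV(Omega) *)
  (forall a : A, brelcompact (FVball W) [set Rf e' | e' in polar p a]).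
Proof.
split.
  exact: (part1 _ _ _ _ _ _ HW Hdom _ HU _ _ HRf).
split.
  exact: (part2 _ _ _ _ _ Hsemi HE _ HW _ HU _ Hf _ HRf).
exact: (part3 _ _ _ _ _ Hsemi HE _ HW Hdom _ HU _ Hf _ HRf).
Qed.
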